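(* Every connected $\mathrm{NP}_2$-digital H-space $(X,e,\mu)$ has $X$ $\mathrm{NP}_2$-contractible.
   Context: A digital image is a finite set $X\subset\mathbb{Z}^n$ with a reflexive symmetric adjacency relation (a finite reflexive graph); continuous maps send adjacent points to adjacent points; connectedness is graph connectedness. On products, $\mathrm{NP}_2$ declares two tuples adjacent iff coordinates are adjacent in at most 2 positions and equal elsewhere. An $\mathrm{NP}_2$-homotopy from $f$ to $g:X\to Y$ is an $\mathrm{NP}_2$-continuous $H:X\times[0,m]_{\mathbb{Z}}\to Y$ with $H(\cdot,0)=f$, $H(\cdot,m)=g$; write $f\simeq_2 g$. $\mathrm{NP}_2$-contractible means $\mathrm{NP}_2$-homotopy equivalent to a single point. An $\mathrm{NP}_2$-digital H-space is $(X,e,\mu)$ with $\mu:X\times X\to X$ $\mathrm{NP}_2$-continuous, $\mu\circ(\mathrm{id}_X,c_e)\simeq_2\mathrm{id}_X$, $\mu\circ(c_e,\mathrm{id}_X)\simeq_2\mathrm{id}_X$, where $(f,g)(x)=(f(x),g(x))$ and $c_e$ is constant at $e$ (homotopies need not be pointed). *)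

(* Defs.v *)
(* Digital images modelled as finite reflexive symmetric graphs
   (finType T with adjacency adj : rel T). *)
From mathcomp Require Import all_boot.
Set Implicit Arguments. Unset Strict Implicit. Unset Printing Implicit Defensive.

Definition dcont (T U : Type) (aT : rel T) (aU : rel U) (f : T -> U) : Prop :=
  forall x y, aT x y -> aU (f x) (f y).

(* NP_2 adjacency on a product of two factors: coordinates adjacent in at most
   2 positions and equal elsewhere; with two (reflexive) factors this means
   both coordinates are adjacent. *)
Definition NP2 (T U : Type) (aT : rel T) (aU : rel U) : rel (T * U) :=
  fun p q => aT p.1 q.1 && aU p.2 q.2.

(* c_1 adjacency on the digital interval [0,m]_Z, represented by 'I_m.+1 *)
Definition c1 (m : nat) : rel 'I_m.+1 :=
  fun s t => (s <= t.+1) && (t <= s.+1).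

Definition NP2_homotopic (T U : Type) (aT : rel T) (aU : rel U) (f g : T -> U) : Prop :=
  exists (m : nat) (H : T * 'I_m.+1 -> U),
    [/\ dcont (NP2 aT (@c1 m)) aU H,
        forall x, H (x, ord0) = f x &
        forall x, H (x, ord_max) = g x].

Definition NP2_homotopy_equivalent (T U : Type) (aT : rel T) (aU : rel U) : Prop :=
  exists (f : T -> U) (g : U -> T),
    [/\ dcont aT aU f, dcont aU aT g,
        NP2_homotopic aT aT (g \o f) id & NP2_homotopic aU aU (f \o g) id].

Definition point_adj : rel unit := fun _ _ => true.

Definition NP2_contractible (T : Type) (aT : rel T) : Prop :=
  NP2_homotopy_equivalent aT point_adj.

Definition NP2_Hspace (T : Type) (aT : rel T) (e : T) (mu : T * T -> T) : Prop :=
  [/\ dcont (NP2 aT aT) aT mu,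
      NP2_homotopic aT aT (fun x => mu (x, e)) id &
      NP2_homotopic aT aT (fun x => mu (e, x)) id].

Definition dconnected (T : finType) (aT : rel T) : Prop :=
  forall x y : T, connect aT x y.

(* Main.v *)
Require Import Defs.
From mathcomp Require Import all_boot.
From mathcomp Require Import zify.
From Stdlib Require Import Classical.
Set Implicit Arguments. Unset Strict Implicit. Unset Printing Implicit Defensive.

Definition stepr (T : Type) (adj : rel T) (f g : T -> T) : Prop :=
  forall a b, adj a b -> adj (f a) (g b).

Definition reach (T : Type) (adj : rel T) (f g : T -> T) : Prop :=
  exists m (F : nat -> T -> T),
    [/\ F 0 =1 f, F m =1 g, (forall t, t <= m -> dcont adj adj (F t))
      & (forall t, t < m -> stepr adj (F t) (F t.+1))].

Lemma hom_reach (T : Type) (adj : rel T) (adj_refl : reflexive adj) f g :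
  NP2_homotopic adj adj f g -> reach adj f g.
Proof.
case=> m [H [Hc H0 Hm]].
exists m, (fun t x => H (x, inord t)); split.
- by move=> x /=; rewrite -H0; congr H; congr pair; apply: val_inj; rewrite /= inordK.
- by move=> x /=; rewrite -Hm; congr H; congr pair; apply: val_inj; rewrite /= inordK.
- move=> t tm x y axy; apply: Hc; rewrite /NP2 /= axy /c1 /= !inordK; lia.
- move=> t tm x y axy; apply: Hc; rewrite /NP2 /= axy /c1 /= !inordK; lia.
Qed.

Lemma reach_hom (T : Type) (adj : rel T) (adj_sym : symmetric adj) f g :
  reach adj f g -> NP2_homotopic adj adj f g.
Proof.
case=> m [F [H0 Hm Hc Hs]].
exists m, (fun p => F (nat_of_ord p.2) p.1); split => //=.
- move=> [x s] [y t] /andP [/= axy st]; move: st; rewrite /c1 => /andP [h1 h2].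
  have sm := ltn_ord s; have tm := ltn_ord t.
  have [e1|[e2|e3]] : (nat_of_ord s = nat_of_ord t) \/ (nat_of_ord s).+1 = nat_of_ord t
     \/ (nat_of_ord t).+1 = nat_of_ord s by lia.
  + rewrite e1; apply: Hc => //; lia.
  + rewrite -e2; apply: Hs => //; lia.
  + rewrite -e3 adj_sym; apply: Hs; [lia | by rewrite adj_sym].
Qed.

Lemma reach_eq (T : Type) (adj : rel T) f f' g : f =1 f' -> reach adj f g -> reach adj f' g.
Proof.
move=> e [m [F [H0 Hm Hc Hs]]]; exists m, F; split => // x; by rewrite H0 e.
Qed.

Lemma reach_cont (T : Type) (adj : rel T) f g : reach adj f g -> dcont adj adj f.
Proof.
move=> [m [F [H0 Hm Hc Hs]]] x y a; rewrite -!H0; exact: Hc.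
Qed.

Lemma reach_pre (T : Type) (adj : rel T) r g :
  reach adj r id -> dcont adj adj g -> stepr adj g r -> reach adj g id.
Proof.
move=> [m [F [H0 Hm Hc Hs]]] Hg Hgr.
exists m.+1, (fun t => if t is t'.+1 then F t' else g); split => //.
- by case=> [|t] //= tm; apply: Hc.
- case=> [|t] tm /=; last exact: Hs.
  by move=> a b ab; rewrite H0; apply: Hgr.
Qed.

Definition C (T : finType) (r : T -> T) := [set r a | a : T].

Lemma inC (T : finType) (r : T -> T) a : r a \in C r.
Proof. by apply: imset_f. Qed.

Lemma CP (T : finType) (r : T -> T) x : x \in C r -> exists a, x = r a.
Proof. by case/imsetP=> a _ ->; exists a. Qed.

Definition stiff (T : finType) (adj : rel T) (r : T -> T) :=
  forall x y, x \in C r -> y \in C r ->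
    (forall z, z \in C r -> adj x z -> adj y z) -> y = x.

Lemma reach_fix (T : finType) (adj : rel T) r f :
  dcont adj adj r -> (forall a, r (r a) = r a) -> stiff adj r ->
  reach adj f id -> forall x, x \in C r -> r (f x) = x.
Proof.
move=> Hr Hid Hst [m [F [H0 Hm Hc Hs]]].
suff: forall k, k <= m -> forall x, x \in C r -> r (F (m - k) x) = x.
  by move=> h x xC; have := h m (leqnn m) x xC; rewrite subnn H0.
elim=> [|k IH] km x xC.
- by rewrite subn0 Hm; case: (CP xC) => a ->; rewrite Hid.
- have e : (m - k) = (m - k.+1).+1 by lia.
  apply: Hst => //; first exact: inC.
  move=> z zC xz; have := IH (ltnW km) z zC; rewrite e => <-; apply: (Hr); apply: Hs; [lia|exact: xz].
Qed.

Lemma propagate (T : finType) (adj : rel T) (P : T -> Prop) e :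
  dconnected adj -> P e -> (forall a b, adj a b -> P a -> P b) -> forall y, P y.
Proof.
move=> Hc Pe Hs y; case/connectP: (Hc e y) => p pth ->.
elim: p e pth Pe => [|b p IH] a //= /andP[ab pth] Pa.
apply: IH => //; exact: Hs ab Pa.
Qed.

Lemma stiff_const (T : finType) (adj : rel T) (adj_sym : symmetric adj) e mu r :
  dcont (NP2 adj adj) adj mu ->
  reach adj (fun x => mu (x, e)) id -> reach adj (fun x => mu (e, x)) id ->
  dconnected adj -> reach adj r id -> (forall a, r (r a) = r a) ->
  stiff adj r -> forall a, r a = r e.
Proof.
move=> Hmu HL HR Hconn Hrr Hid Hst.
have Hr := reach_cont Hrr.
have c3 : forall y x, x \in C r -> r (mu (x, y)) = x.
  apply: (propagate Hconn); first exact: (reach_fix Hr Hid Hst HL).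
  move=> y y' yy' Hy x xC; apply: Hst => //; first exact: inC.
  move=> z zC xz; have <- := Hy z zC; apply: (Hr); apply: Hmu.
  by rewrite /NP2 /= xz adj_sym yy'.
have c4 : forall y x, x \in C r -> r (mu (y, x)) = x.
  apply: (propagate Hconn); first exact: (reach_fix Hr Hid Hst HR).
  move=> y y' yy' Hy x xC; apply: Hst => //; first exact: inC.
  move=> z zC xz; have <- := Hy z zC; apply: (Hr); apply: Hmu.
  by rewrite /NP2 /= xz adj_sym yy'.
move=> a.
by rewrite -(c3 (r e) (r a) (inC r a)) (c4 (r a) (r e) (inC r e)).
Qed.

Lemma fold_step (T : finType) (adj : rel T) (adj_refl : reflexive adj)
  (adj_sym : symmetric adj) r x y :
  reach adj r id -> (forall a, r (r a) = r a) ->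
  x \in C r -> y \in C r -> (forall z, z \in C r -> adj x z -> adj y z) -> y <> x ->
  exists r', [/\ reach adj r' id, (forall a, r' (r' a) = r' a) & #|C r'| < #|C r|].
Proof.
move=> Hrr Hid xC yC Hd yx.
have Hr := reach_cont Hrr.
pose g z := if z == x then y else z.
have gC : forall u, u \in C r -> g u \in C r by move=> u uC; rewrite /g; case: eqP.
have gne : forall u, g u != x by move=> u; rewrite /g; case: (eqVneq u x) => // _; apply/eqP.
have gstep : forall u v, v \in C r -> adj u v -> adj (g u) v.
  by move=> u v vC uv; rewrite /g; case: eqP => [ux|//]; apply: Hd => //; rewrite -ux.
have rC : forall c, c \in C r -> r c = c by move=> c /CP [a ->]; rewrite Hid.
exists (fun a => g (r a)); split.
- apply: reach_pre Hrr _ _.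
  + move=> a b ab; apply: (gstep); first by apply: (gC); apply: inC.
    rewrite adj_sym; apply: (gstep); first exact: inC.
    by rewrite adj_sym; apply: (Hr).
  + by move=> a b ab; apply: (gstep); [exact: inC | apply: (Hr)].
- move=> a; rewrite rC; last by apply: (gC); apply: inC.
  by rewrite {1}/g (negbTE (gne _)).
- apply: proper_card; apply/properP; split.
  + by apply/subsetP => w /CP [a ->]; apply: (gC); apply: inC.
  + exists x => //; apply/negP => /CP [a ha]; move: (gne (r a)); by rewrite -ha eqxx.
Qed.

Theorem mainTheorem13 (T : finType) (adj : rel T)
  (adj_refl : reflexive adj) (adj_sym : symmetric adj)
  (e : T) (mu : T * T -> T) :
  NP2_Hspace adj e mu -> dconnected adj -> NP2_contractible adj.
Proof.
move=> [Hmu HL HR] Hconn.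
have HL' := hom_reach adj_refl HL; have HR' := hom_reach adj_refl HR.
suff: forall n r, #|C r| <= n -> reach adj r id -> (forall a, r (r a) = r a) ->
    NP2_contractible adj.
  move=> h; apply: (h #|C id| id) => //.
  exists 0, (fun _ => id); split => // t _ a b //.
elim=> [|n IH] r Hn Hrr Hid;
  (case: (classic (exists x y, [/\ x \in C r, y \in C r,
     (forall z, z \in C r -> adj x z -> adj y z) & y <> x])) => [[x [y [xC yC Hd yx]]]|Hnex]).
- case: (fold_step adj_refl adj_sym Hrr Hid xC yC Hd yx) => r' [_ _ hc]; lia.
- have Hst : stiff adj r.
    move=> x y xC yC Hd; case: (eqVneq y x) => // /eqP yx; exfalso; apply: Hnex.
    by exists x, y.
  have Hc := stiff_const adj_sym Hmu HL' HR' Hconn Hrr Hid Hst.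
  exists (fun _ => tt), (fun _ => r e); split => //; try by move=> ? ? _; apply: adj_refl.
  + apply: (reach_hom adj_sym); apply: reach_eq Hrr => a /=; exact: Hc.
  + by exists 0, (fun p => p.1); split => // [[]].
- case: (fold_step adj_refl adj_sym Hrr Hid xC yC Hd yx) => r' [Hr' Hid' hc].
  apply: (IH r') => //; lia.
- have Hst : stiff adj r.
    move=> x y xC yC Hd; case: (eqVneq y x) => // /eqP yx; exfalso; apply: Hnex.
    by exists x, y.
  have Hc := stiff_const adj_sym Hmu HL' HR' Hconn Hrr Hid Hst.
  exists (fun _ => tt), (fun _ => r e); split => //; try by move=> ? ? _; apply: adj_refl.
  + apply: (reach_hom adj_sym); apply: reach_eq Hrr => a /=; exact: Hc.
  + by exists 0, (fun p => p.1); split => // [[]].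
Qed.
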